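(* For $m,n\ge2$, \[ \sum_{k=2}^m\sum_{l=2}^n k!\left\{{m\atop k}\right\}\, l!\left\{{n\atop l}\right\}\,G_{k,l}=1-\frac{m!\,n!}{(m+n-1)!}. \]
   Context: The generalized Gregory coefficients $G_{m,n}$ are defined by $\sum_{m,n\ge0}G_{m,n}x^my^n=\dfrac{y\log^2(1+x)-x\log^2(1+y)}{\log(1+x)-\log(1+y)}$ (formal power series; $\log^ku=(\log u)^k$). $\left\{{n\atop m}\right\}$ are the Stirling numbers of the second kind: $\left\{{n+1\atop m}\right\}=\left\{{n\atop m-1}\right\}+m\left\{{n\atop m}\right\}$, $\left\{{0\atop 0}\right\}=1$, $\left\{{n\atop 0}\right\}=\left\{{0\atop m}\right\}=0$ for $n,m\ne0$. *)

(* Defs.v *)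
From mathcomp Require Import all_boot all_order all_algebra.
Set Implicit Arguments. Unset Strict Implicit. Unset Printing Implicit Defensive.
Import Order.TTheory GRing.Theory Num.Theory.
Local Open Scope ring_scope.

Fixpoint stirling2 (n m : nat) : nat :=
  match n, m with
  | 0, 0 => 1
  | 0, _.+1 => 0
  | _.+1, 0 => 0
  | n'.+1, m'.+1 => stirling2 n' m' + m'.+1 * stirling2 n' m'.+1
  end%N.

(* Bivariate formal power series over Q are represented by their coefficient
   functions  nat -> nat -> rat  (coefficient of x^i y^j). *)
Definition fps2 := nat -> nat -> rat.

Definition fps2_mul (A B : fps2) : fps2 := fun m n =>
  \sum_(i < m.+1) \sum_(j < n.+1) A i j * B (m - i)%N (n - j)%N.

(* Coefficients of log(1+x) = sum_{i>=1} (-1)^(i+1) x^i / i. *)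
Definition logc (i : nat) : rat :=
  if i is 0 then 0 else (-1) ^+ i.+1 / i%:R.

Definition log2c (i : nat) : rat :=
  \sum_(j < i.+1) logc j * logc (i - j)%N.

(* Denominator  log(1+x) - log(1+y). *)
Definition gden : fps2 := fun i j =>
  (if j == 0%N then logc i else 0) - (if i == 0%N then logc j else 0).

(* Numerator  y log^2(1+x) - x log^2(1+y). *)
Definition gnum : fps2 := fun i j =>
  (if j == 1%N then log2c i else 0) - (if i == 1%N then log2c j else 0).

(* G is the coefficient family of the formal power series
   (y log^2(1+x) - x log^2(1+y)) / (log(1+x) - log(1+y)), i.e. the unique
   (Q[[x,y]] is an integral domain) series with  gden * G = gnum. *)
Definition is_gen_gregory (G : fps2) : Prop :=
  forall m n : nat, fps2_mul gden G m n = gnum m n.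

(* Main.v *)
Require Import Defs.
From mathcomp Require Import all_boot all_order all_algebra.
From mathcomp Require Import ring zify.
Import Order.TTheory GRing.Theory Num.Theory.
Local Open Scope ring_scope.

Definition A (m k : nat) : rat := ((k`! * stirling2 m k)%N)%:R.

Lemma stirling2_gt m k : (m < k)%N -> stirling2 m k = 0%N.
Proof.
elim: m k => [|m IH] [|k] //= Hk.
by rewrite !IH //; lia.
Qed.

Lemma A_gt m k : (m < k)%N -> A m k = 0.
Proof. by move=> H; rewrite /A stirling2_gt // muln0. Qed.

Lemma A00 : A 0 0 = 1. Proof. by []. Qed.
Lemma A0S k : A 0 k.+1 = 0. Proof. by rewrite /A /= muln0. Qed.
Lemma AS0 m : A m.+1 0 = 0. Proof. by []. Qed.
Lemma ASS m k : A m.+1 k.+1 = k.+1%:R * (A m k + A m k.+1).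
Proof.
rewrite /A /= -natrD -natrM; congr _%:R.
rewrite factS; ring.
Qed.
Lemma stir1 m : stirling2 m.+1 1 = 1%N.
Proof. elim: m => [|m IH] //.
change (stirling2 m.+1 0 + 1 * stirling2 m.+1 1 = 1)%N; by rewrite IH. Qed.
Lemma AS1 m : A m.+1 1 = 1.
Proof. by rewrite /A stir1. Qed.
Lemma A01 : A 0 1 = 0. Proof. by []. Qed.

Lemma logcS_mul i : logc i.+1 * i.+1%:R = (-1) ^+ i.
Proof. by rewrite /= mulfVK ?pnatr_eq0 // !exprS !mulN1r opprK. Qed.

Definition Qs M b j := \sum_(i < b.+1) logc i * A M (i + j).

Lemma Qs_peel M b j : Qs M b j = \sum_(i < b) logc i.+1 * A M (i.+1 + j).
Proof. by rewrite /Qs big_ord_recl /= mul0r add0r. Qed.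

Lemma Qs0 b j : Qs 0 b j = 0.
Proof. by rewrite Qs_peel big1 // => i _; rewrite addSn A0S mulr0. Qed.

Lemma tele (a : nat -> rat) c :
  \sum_(i < c) (-1) ^+ i * (a i + a i.+1) = a 0%N - (-1) ^+ c * a c.
Proof.
elim: c => [|c IH]; first by rewrite big_ord0 expr0 mul1r subrr.
rewrite big_ord_recr /= IH exprS; ring.
Qed.

Lemma Qs_step M b j : (M < b + j)%N ->
  Qs M.+1 b j = A M j + j%:R * \sum_(i < b) logc i.+1 * (A M (i + j) + A M (i + j).+1).
Proof.
move=> H; rewrite Qs_peel.
transitivity (\sum_(i < b) ((-1) ^+ i * (A M (i + j) + A M (i + j).+1)
   + j%:R * (logc i.+1 * (A M (i + j) + A M (i + j).+1)))).
  apply: eq_bigr => i _; rewrite addSn ASS -(logcS_mul i) -addSn natrD; ring.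
rewrite big_split -mulr_sumr (tele (fun i => A M (i + j))) add0n.
by rewrite (@A_gt M (b + j)) // mulr0 subr0.
Qed.

Lemma Qs_pair M b j :
  \sum_(i < b) logc i.+1 * (A M (i + j.+1) + A M (i + j.+1).+1) = Qs M b j + Qs M b j.+1.
Proof.
rewrite !Qs_peel -big_split; apply: eq_bigr => i _.
by rewrite !addnS !addSn mulrDr.
Qed.

Lemma Qs_main M b j : (M < b + j)%N -> Qs M.+1 b j = M.+1%:R * A M j.
Proof.
elim: M j => [|M IH] [|j] H.
- by rewrite Qs_step // mul0r addr0 mul1r.
- by rewrite Qs_step // Qs_pair !Qs0 A0S addr0 mulr0 add0r mulr0.
- by rewrite Qs_step // mul0r addr0 AS0 mulr0.
- rewrite Qs_step // Qs_pair !IH; [|lia|lia].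
  rewrite [A M.+1 j.+1]ASS; ring.
Qed.

Lemma tri (f : nat -> nat -> rat) n :
  \sum_(k < n) \sum_(i < k.+1) f i (k - i)%N = \sum_(p < n) \sum_(i < n - p) f i p.
Proof.
elim: n => [|n IH]; first by rewrite !big_ord0.
rewrite [LHS]big_ord_recr /= IH.
transitivity (\sum_(p < n.+1) (\sum_(i < n - p) f i p + f (n - p)%N p)).
  rewrite big_split /= [X in _ = X + _]big_ord_recr /= subnn big_ord0 addr0.
  congr (_ + _).
  rewrite (reindex_inj rev_ord_inj) /=; apply: eq_bigr => i _.
  by rewrite subSS subKn // -ltnS.
apply: eq_bigr => p _; rewrite subSn; last by rewrite -ltnS.
by rewrite big_ord_recr.
Qed.

Lemma T1 (g : nat -> rat) M :
  \sum_(k < M.+2) A M.+1 k * \sum_(i < k.+1) logc i * g (k - i)%N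
  = M.+1%:R * \sum_(p < M.+1) A M p * g p.
Proof.
transitivity (\sum_(k < M.+2) \sum_(i < k.+1)
   (fun i p => logc i * A M.+1 (i + p) * g p) i (k - i)%N).
  apply: eq_bigr => k _; rewrite mulr_sumr; apply: eq_bigr => i _ /=.
  rewrite subnKC; [ring | by rewrite -ltnS].
rewrite (tri (fun i p => logc i * A M.+1 (i + p) * g p)).
transitivity (\sum_(p < M.+2) Qs M.+1 (M.+1 - p) p * g p).
  apply: eq_bigr => p _ /=; rewrite /Qs mulr_suml subSn; last by rewrite -ltnS.
  by [].
transitivity (\sum_(p < M.+2) M.+1%:R * A M p * g p).
  apply: eq_bigr => p _; rewrite Qs_main //.
  have := ltn_ord p; lia.
rewrite big_ord_recr /= (@A_gt M M.+1) // mulr0 mul0r addr0 mulr_sumr.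
by apply: eq_bigr => p _; rewrite mulrA.
Qed.

Lemma T1g (g : nat -> rat) M :
  \sum_(k < M.+1) A M k * \sum_(i < k.+1) logc i * g (k - i)%N
  = M%:R * \sum_(p < M) A M.-1 p * g p.
Proof.
case: M => [|M]; last exact: T1.
by rewrite big_ord1 big_ord1 /= mul0r mulr0 mul0r.
Qed.

Lemma mul_gden (G : fps2) k l : fps2_mul gden G k l =
  \sum_(i < k.+1) logc i * G (k - i)%N l - \sum_(j < l.+1) logc j * G k (l - j)%N.
Proof.
rewrite /fps2_mul /gden.
under eq_bigr do under eq_bigr do rewrite mulrBl.
under eq_bigr do rewrite sumrB.
rewrite sumrB; congr (_ - _).
  apply: eq_bigr => i _; rewrite big_ord_recl /= subn0 big1 ?addr0 // => j _.
  by rewrite mul0r.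
rewrite big_ord_recl /= subn0.
rewrite [X in _ + X]big1 ?addr0 //.
by move=> i _; rewrite big1 // => j _; rewrite mul0r.
Qed.

Definition F2 (G : fps2) (M1 M2 N1 N2 : nat) :=
  \sum_(k < M1) \sum_(l < N1) A M2 k * A N2 l * G k l.
Definition L2 M := \sum_(k < M.+1) A M k * log2c k.

Lemma sel N (x : rat) :
  \sum_(l < N.+1) A N l * (if (l : nat) == 1%N then x else 0) = A N 1 * x.
Proof.
case: N => [|N]; first by rewrite big_ord1 /= mulr0 A01 mul0r.
rewrite big_ord_recl big_ord_recl /= AS0 mul0r add0r big1 ?addr0 //.
by move=> i _; rewrite mulr0.
Qed.

Lemma E (G : fps2) (HG : is_gen_gregory G) M N :
  M%:R * F2 G M M.-1 N.+1 N - N%:R * F2 G M.+1 M N N.-1 = L2 M * A N 1 - A M 1 * L2 N.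
Proof.
have HS : \sum_(k < M.+1) \sum_(l < N.+1) A M k * A N l * fps2_mul gden G k l
   = L2 M * A N 1 - A M 1 * L2 N.
  under eq_bigr do under eq_bigr do rewrite HG /gnum mulrBr.
  under eq_bigr do rewrite sumrB.
  rewrite sumrB; congr (_ - _).
    rewrite /L2 mulr_suml; apply: eq_bigr => k _.
    transitivity (A M k * \sum_(l < N.+1) A N l * (if (l : nat) == 1%N then log2c k else 0)).
      by rewrite mulr_sumr; apply: eq_bigr => l _; rewrite mulrA.
    by rewrite sel; ring.
  rewrite exchange_big /= /L2 mulr_sumr; apply: eq_bigr => l _.
  transitivity (A N l * \sum_(k < M.+1) A M k * (if (k : nat) == 1%N then log2c l else 0)).
    by rewrite mulr_sumr; apply: eq_bigr => k _; ring.
  by rewrite sel; ring.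
rewrite -HS.
under [RHS]eq_bigr do under eq_bigr do rewrite mul_gden mulrBr.
under [RHS]eq_bigr do rewrite sumrB.
rewrite sumrB; congr (_ - _).
  rewrite exchange_big /=.
  transitivity (\sum_(l < N.+1) A N l * (\sum_(k < M.+1) A M k *
      \sum_(i < k.+1) logc i * G (k - i)%N l)); last first.
    apply: eq_bigr => l _; rewrite mulr_sumr.
    by apply: eq_bigr => k _; ring.
  transitivity (\sum_(l < N.+1) A N l * (M%:R * \sum_(p < M) A M.-1 p * G p l)); last first.
    by apply: eq_bigr => l _; rewrite (T1g (fun p => G p l)).
  rewrite /F2 exchange_big /= mulr_sumr; apply: eq_bigr => l _.
  rewrite !mulr_sumr; apply: eq_bigr => k _; ring.
transitivity (\sum_(k < M.+1) A M k * (\sum_(l < N.+1) A N l *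
      \sum_(j < l.+1) logc j * G k (l - j)%N)); last first.
  apply: eq_bigr => k _; rewrite mulr_sumr.
  by apply: eq_bigr => l _; ring.
transitivity (\sum_(k < M.+1) A M k * (N%:R * \sum_(q < N) A N.-1 q * G k q)); last first.
  by apply: eq_bigr => k _; rewrite (T1g (fun q => G k q)).
rewrite /F2 mulr_sumr; apply: eq_bigr => k _.
rewrite !mulr_sumr; apply: eq_bigr => l _; ring.
Qed.

Lemma L2E M : L2 M = if M == 2%N then 2 else 0.
Proof.
rewrite /L2 /log2c (T1g logc).
case: M => [|[|M]]; first by rewrite mul0r.
  by rewrite big_ord1 /= mulr0.
have -> : \sum_(p < M.+2) A M.+1.+1.-1 p * logc p = Qs M.+1 M.+1 0.
  by rewrite /Qs; apply: eq_bigr => p _; rewrite addn0 mulrC.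
rewrite Qs_main; last by rewrite addn0.
case: M => [|M]; first by rewrite A00 /=; ring.
by rewrite AS0 !mulr0.
Qed.

Definition C (m n : nat) : rat :=
  if (m == 1%N) && (n == 1%N) then 1
  else if (1 < m)%N && (1 < n)%N then - ((m`! * n`!)%N)%:R / ((m + n - 1)`!)%:R
  else 0.

Lemma fact_neq0 k : (k`!)%:R != 0 :> rat.
Proof. by rewrite pnatr_eq0 -lt0n fact_gt0. Qed.

Lemma Crec M N : M.+1%:R * C M N.+1 =
  N.+1%:R * C M.+1 N + (if M.+1 == 2%N then 2 else 0) - (if N.+1 == 2%N then 2 else 0).
Proof.
rewrite /C.
case: M => [|[|m]]; case: N => [|[|n]] /=; try (rewrite ?mulr0 ?mul0r; ring).
- have -> : (2 + n.+2 - 1 = n.+3)%N by lia.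
  rewrite !factS !natrM.
  field; rewrite ?fact_neq0 ?(addrC 1) ?natr1 -?natrD ?pnatr_eq0 //=.
- have -> : (m.+2 + 2 - 1 = m.+3)%N by lia.
  rewrite !factS !natrM.
  field; rewrite ?fact_neq0 ?(addrC 1) ?natr1 -?natrD ?pnatr_eq0 //=.
- have -> : (m.+2 + n.+3 - 1 = (m + n).+4)%N by lia.
  have -> : (m.+3 + n.+2 - 1 = (m + n).+4)%N by lia.
  rewrite !factS !natrM; ring.
Qed.

Lemma FC (G : fps2) (HG : is_gen_gregory G) N M : F2 G M.+1 M N.+1 N = C M N.
Proof.
elim: N M => [|N IH] M.
  have h := E G HG M.+1 0.
  rewrite A01 !L2E /= !mulr0 mul0r !subr0 in h.
  rewrite /C !andbF.
  by move/eqP: h; rewrite mulf_eq0 pnatr_eq0 /= => /eqP.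
have h := E G HG M.+1 N.+1.
rewrite /= IH !AS1 mulr1 mul1r !L2E in h.
apply: (@mulfI _ M.+1%:R); first by rewrite pnatr_eq0.
rewrite Crec -addrA -h; ring.
Qed.

Lemma split2 N (h : nat -> rat) :
  \sum_(l < N.+2) A N.+1 l * h l = h 1%N + \sum_(2 <= l < N.+2) A N.+1 l * h l.
Proof. by rewrite -(big_mkord xpredT (fun l => A N.+1 l * h l)) big_ltn // big_ltn // AS0 AS1 mul0r add0r mul1r. Qed.

Lemma F2_split (G : fps2) M N :
  F2 G M.+2 M.+1 N.+2 N.+1 = \sum_(k < M.+2) A M.+1 k * \sum_(l < N.+2) A N.+1 l * G k l.
Proof.
rewrite /F2; apply: eq_bigr => k _; rewrite mulr_sumr.
by apply: eq_bigr => l _; rewrite mulrA.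
Qed.

Theorem theorem5p5 (G : nat -> nat -> rat) (HG : is_gen_gregory G)
    (m n : nat) (hm : (2 <= m)%N) (hn : (2 <= n)%N) :
  \sum_(2 <= k < m.+1) \sum_(2 <= l < n.+1)
      ((k`! * stirling2 m k)%N)%:R * ((l`! * stirling2 n l)%N)%:R * G k l
  = 1 - ((m`! * n`!)%N)%:R / ((m + n - 1)`!)%:R.
Proof.
transitivity (\sum_(2 <= k < m.+1) \sum_(2 <= l < n.+1) A m k * A n l * G k l);
  first by [].
case: m hm => [|[|M]] // _; case: n hn => [|[|N]] // _.
have row : forall k, \sum_(l < N.+3) A N.+2 l * G k l
    = G k 1%N + \sum_(2 <= l < N.+3) A N.+2 l * G k l.
  by move=> k; rewrite (split2 _ (fun l => G k l)).
have row1 : forall k, \sum_(l < 2) A 1 l * G k l = G k 1%N.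
  by move=> k; rewrite (split2 _ (fun l => G k l)) big_geq // addr0.
have H1 := FC G HG N.+2 M.+2.
have H2 := FC G HG N.+2 1.
have H3 := FC G HG 1 M.+2.
rewrite F2_split (split2 _ (fun k => \sum_(l < N.+3) A N.+2 l * G k l)) in H1.
rewrite F2_split (split2 _ (fun k => \sum_(l < N.+3) A N.+2 l * G k l)) in H2.
rewrite F2_split (split2 _ (fun k => \sum_(l < 2) A 1 l * G k l)) in H3.
rewrite big_geq // addr0 row in H2.
rewrite row in H1.
rewrite row1 in H3.
have E1 : \sum_(2 <= k < M.+3) A M.+2 k * \sum_(l < N.+3) A N.+2 l * G k l
   = \sum_(2 <= k < M.+3) A M.+2 k * G k 1%N
     + \sum_(2 <= k < M.+3) \sum_(2 <= l < N.+3) A M.+2 k * A N.+2 l * G k l.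
  rewrite -big_split; apply: eq_bigr => k _; rewrite row mulrDr mulr_sumr; congr (_ + _).
  by apply: eq_bigr => l _; rewrite mulrA.
have E3 : \sum_(2 <= k < M.+3) A M.+2 k * \sum_(l < 2) A 1 l * G k l
   = \sum_(2 <= k < M.+3) A M.+2 k * G k 1%N.
  by apply: eq_bigr => k _; rewrite row1.
rewrite E1 in H1; rewrite E3 in H3.
have H4 := FC G HG 1 1.
rewrite F2_split (split2 _ (fun k => \sum_(l < 2) A 1 l * G k l)) big_geq // addr0 row1 in H4.
have C1 : C 1 N.+2 = 0 by [].
have C2 : C M.+2 1 = 0 by [].
have C3 : C 1 1 = 1 by [].
have C4 : C M.+2 N.+2 = - ((M.+2`! * N.+2`!)%N)%:R / ((M.+2 + N.+2 - 1)`!)%:R by [].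
rewrite C1 in H2; rewrite C2 in H3; rewrite C3 in H4; rewrite C4 in H1.
rewrite mulNr in H1.
move: H1 H2 H3 H4.
set Y := (_ / _).
set X := (\sum_(2 <= k < M.+3) \sum_(2 <= l < N.+3) _).
set R1 := (\sum_(2 <= l < N.+3) _).
set K1 := (\sum_(2 <= k < M.+3) _).
move=> H1 H2 H3 H4.
have -> : X = (G 1%N 1%N + R1 + (K1 + X)) - (G 1%N 1%N + R1) - (G 1%N 1%N + K1) + G 1%N 1%N by ring.
rewrite H1 H2 H3 H4; ring.
Qed.
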